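(* For $a,b>1$ define $$x=\frac{\sqrt{a^2-1}\,(a^3-8)}{a^6},\quad x_1=(\sqrt{a^2-1}-\sqrt{b^2-1})^3+a^3,\quad y=\frac{\sqrt{b^2-1}\,(b^3-8)}{b^6},\quad y_1=(\sqrt{a^2-1}-\sqrt{b^2-1})^3+b^3.$$ Let $b_1$ be the only real root in $(\sqrt2,\sqrt2(\sqrt3+1))$ of $p(z)=-2z^5+3z^3+40z^2-48$. Then for all $a\in(1,2)$ and $b\in(\sqrt2,b_1)$, $$x<0,\qquad y_1>0,\qquad \frac{\partial x_1}{\partial b}\le 0,\qquad \frac{\partial (y\,y_1)}{\partial b}>0.$$ *)

(* Defs.v *)
From Stdlib Require Import Reals.
From Coquelicot Require Import Coquelicot.
Open Scope R_scope.

Definition xf (a : R) : R := sqrt (a ^ 2 - 1) * (a ^ 3 - 8) / a ^ 6.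
Definition x1f (a b : R) : R := (sqrt (a ^ 2 - 1) - sqrt (b ^ 2 - 1)) ^ 3 + a ^ 3.
Definition yf (b : R) : R := sqrt (b ^ 2 - 1) * (b ^ 3 - 8) / b ^ 6.
Definition y1f (a b : R) : R := (sqrt (a ^ 2 - 1) - sqrt (b ^ 2 - 1)) ^ 3 + b ^ 3.
Definition pz (z : R) : R := -2 * z ^ 5 + 3 * z ^ 3 + 40 * z ^ 2 - 48.

(* Main.v *)
Require Import Defs.
From Stdlib Require Import Reals Lra Psatz.
From Coquelicot Require Import Coquelicot.
Open Scope R_scope.

Lemma p_pos : forall b1 : R,
    sqrt 2 < b1 < sqrt 2 * (sqrt 3 + 1) ->
    (forall z : R, sqrt 2 < z < sqrt 2 * (sqrt 3 + 1) -> pz z = 0 -> z = b1) ->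
    forall b, sqrt 2 < b < b1 -> pz b > 0.
Proof.
intros b1 Hb1 Hu b Hb.
assert (Hs : sqrt 2 * sqrt 2 = 2) by (apply sqrt_sqrt; lra).
assert (Hs0 : 0 < sqrt 2) by (apply sqrt_lt_R0; lra).
assert (Hp2 : pz (sqrt 2) > 0).
{ unfold pz. assert (sqrt 2 < 2) by nra.
  replace (sqrt 2 ^ 5) with ((sqrt 2 * sqrt 2)*(sqrt 2*sqrt 2)*sqrt 2) by ring.
  replace (sqrt 2 ^ 3) with ((sqrt 2 * sqrt 2)*sqrt 2) by ring.
  replace (sqrt 2 ^ 2) with (sqrt 2 * sqrt 2) by ring. rewrite Hs. lra. }
destruct (Rtotal_order (pz b) 0) as [Hlt|[Heq|Hgt]]; [|exfalso|lra].
- exfalso.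
  destruct (IVT (fun t => - pz t) (sqrt 2) b) as [z [Hz1 Hz2]].
  + unfold pz; reg.
  + lra.
  + lra.
  + lra.
  + assert (pz z = 0) by lra.
    assert (z <> sqrt 2) by (intro; subst; lra).
    assert (z = b1) by (apply Hu; [lra|assumption]). lra.
- assert (b = b1) by (apply Hu; [lra|assumption]). lra.
Qed.

Lemma key b v w P : 2 < b*b -> 0 < v -> v*v = b*b-1 -> -v < w < v -> v < b ->
  P = pz b -> P > 0 ->
  P*(w^3+b^3) + 3*v^2*(b^3-8)*b^3 - 3*v*(b^3-8)*b^2*w^2 > 0.
Proof.
intros Hb Hv Hvv Hw Hvb HP HP0.
assert (Hb0 : 0 < b) by lra.
assert (Hw3 : w^3 >= - v * w^2).
{ assert (0 <= w^2) by nra. assert (w + v > 0) by lra.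
  replace (w^3) with (w * w^2) by ring. nra. }
assert (Hw2 : w^2 <= v^2) by nra.
destruct (Rle_or_lt 2 b) as [H2|H2].
- assert (Hc : 0 <= b^3 - 8).
  { assert (b^3 - 8 = (b-2)*(b^2+2*b+4)) by ring. assert (0 <= (b-2)*(b^2+2*b+4)) by (apply Rmult_le_pos; nra). lra. }
  assert (T1 : P*(w^3+b^3) > 0).
  { assert (v^3 < b^3).
    { assert (b^3 - v^3 = (b-v)*(b^2+b*v+v^2)) by ring. assert (0 < (b-v)*(b^2+b*v+v^2)) by (apply Rmult_lt_0_compat; nra). lra. }
    assert (w^3 >= - v^3).
    { assert (v*w^2 <= v * v^2) by (apply Rmult_le_compat_l; lra).
      replace (v^3) with (v*v^2) by ring. lra. }
    apply Rmult_lt_0_compat; lra. }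
  assert (T2 : v^2*b - v*w^2 >= 0).
  { assert (v*w^2 <= v * v^2) by (apply Rmult_le_compat_l; lra).
    assert (v^2 * b >= v*v^2). { replace (v*v^2) with (v^2*v) by ring.
      apply Rle_ge, Rmult_le_compat_l; nra. } lra. }
  assert (T3 : 3*(b^3-8)*b^2*(v^2*b - v*w^2) >= 0).
  { apply Rle_ge. apply Rmult_le_pos; [|lra].
    apply Rmult_le_pos; [lra|]. nra. }
  replace (P*(w^3+b^3) + 3*v^2*(b^3-8)*b^3 - 3*v*(b^3-8)*b^2*w^2)
   with (P*(w^3+b^3) + 3*(b^3-8)*b^2*(v^2*b - v*w^2)) by ring.
  lra.
- set (d := 8 - b^3).
  assert (Hd : 0 < d).
  { unfold d. assert (8 - b^3 = (2-b)*(b^2+2*b+4)) by ring. assert (0 < (2-b)*(b^2+2*b+4)) by (apply Rmult_lt_0_compat; nra). lra. }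
  assert (Hg : P - 3*v^2*d > 0).
  { rewrite HP. unfold pz, d.
    replace (v^2) with (b*b-1) by (rewrite <- Hvv; ring).
    assert (b^5 > 0) by (apply pow_lt; lra). nra. }
  assert (Hb3 : 0 < b^3) by (apply pow_lt; lra).
  assert (L : P*(w^3+b^3) + 3*v^2*(b^3-8)*b^3 - 3*v*(b^3-8)*b^2*w^2
     >= b^3*(P - 3*v^2*d) + v*w^2*(3*d*b^2 - P)).
  { unfold d. assert (P*w^3 >= P*(-v*w^2)) by (apply Rle_ge, Rmult_le_compat_l; lra).
    nra. }
  destruct (Rle_or_lt P (3*d*b^2)) as [H3|H3].
  + assert (0 <= v*w^2*(3*d*b^2 - P)).
    { apply Rmult_le_pos; [|lra]. apply Rmult_le_pos; nra. }
    assert (b^3*(P - 3*v^2*d) > 0) by (apply Rmult_lt_0_compat; lra).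
    lra.
  + assert (v*w^2*(3*d*b^2 - P) >= v*v^2*(3*d*b^2 - P)).
    { apply Rle_ge. replace (v*w^2*(3*d*b^2 - P)) with (- ((P - 3*d*b^2) * (v*w^2))) by ring.
      replace (v*v^2*(3*d*b^2 - P)) with (- ((P - 3*d*b^2) * (v*v^2))) by ring.
      apply Ropp_le_contravar, Rmult_le_compat_l; [lra|]. apply Rmult_le_compat_l; lra. }
    assert (E : b^3*(P - 3*v^2*d) + v*v^2*(3*d*b^2 - P)
       = (b-v)*(P*(b^2+b*v+v^2) - 3*d*v^2*b^2)) by ring.
    assert (P*(b^2+b*v+v^2) > 3*d*v^2*b^2).
    { assert (b^2+b*v+v^2 > 3*v^2) by nra.
      assert (P*(b^2+b*v+v^2) > P*(3*v^2)) by (apply Rmult_lt_compat_l; lra).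
      assert (P*(3*v^2) > 3*d*b^2*v^2).
      { replace (P*(3*v^2)) with (3*v^2*P) by ring.
        replace (3*d*b^2*v^2) with (3*v^2*(d*b^2)) by ring.
        apply Rmult_lt_compat_l; nra. }
      lra. }
    assert ((b-v)*(P*(b^2+b*v+v^2) - 3*d*v^2*b^2) > 0) by (apply Rmult_lt_0_compat; lra).
    lra.
Qed.

Lemma d1 a b : 1 < b -> is_derive (fun t => x1f a t) b
  (-3 * (sqrt (a^2-1) - sqrt (b^2-1))^2 * b / sqrt (b^2-1)).
Proof.
intros Hb. unfold x1f. auto_derive.
- nra.
- replace (b*(b*1) + -(1)) with (b^2-1) by ring.
  replace (a*(a*1) - 1) with (a^2-1) by ring.
  assert (0 < sqrt (b^2-1)) by (apply sqrt_lt_R0; nra).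
  field. lra.
Qed.

Definition Nf u v b := let w := u - v in
  (b^2*(b^3-8) + 3*v^2*b^3 - 6*v^2*(b^3-8))*(w^3+b^3) + 3*v^2*(b^3-8)*b^3 - 3*v*(b^3-8)*b^2*w^2.

Lemma d2 a b : 1 < b -> is_derive (fun t => yf t * y1f a t) b
   (Nf (sqrt (a^2-1)) (sqrt (b^2-1)) b / (sqrt (b^2-1) * b^7)).
Proof.
intros Hb. unfold yf, y1f, Nf. auto_derive.
- assert (0 < b * (b * (b * (b * (b * (b * 1)))))) by (repeat apply Rmult_lt_0_compat; lra).
  repeat split; try nra; lra.
- replace (b*(b*1) + -(1)) with (b^2-1) by ring.
  replace (a*(a*1) - 1) with (a^2-1) by ring.
  assert (0 < sqrt (b^2-1)) by (apply sqrt_lt_R0; nra).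
  field. split; lra.
Qed.

Theorem lemma3 :
  forall b1 : R,
    sqrt 2 < b1 < sqrt 2 * (sqrt 3 + 1) ->
    pz b1 = 0 ->
    (forall z : R, sqrt 2 < z < sqrt 2 * (sqrt 3 + 1) -> pz z = 0 -> z = b1) ->
    forall a b : R, 1 < a < 2 -> sqrt 2 < b < b1 ->
      xf a < 0 /\
      y1f a b > 0 /\
      ex_derive (fun t => x1f a t) b /\ Derive (fun t => x1f a t) b <= 0 /\
      ex_derive (fun t => yf t * y1f a t) b /\ Derive (fun t => yf t * y1f a t) b > 0.
Proof.
intros b1 Hb1 Hp1 Hu a b Ha Hb.
assert (HP := p_pos b1 Hb1 Hu b Hb).
assert (Hs : sqrt 2 * sqrt 2 = 2) by (apply sqrt_sqrt; lra).
assert (Hs0 : 0 < sqrt 2) by (apply sqrt_lt_R0; lra).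
assert (Hb2 : 2 < b*b) by nra.
assert (Hb0 : 1 < b) by nra.
set (u := sqrt (a^2-1)). set (v := sqrt (b^2-1)).
assert (Hu0 : 0 < u) by (apply sqrt_lt_R0; nra).
assert (Huu : u*u = a^2-1) by (apply sqrt_sqrt; nra).
assert (Hv0 : 0 < v) by (apply sqrt_lt_R0; nra).
assert (Hvv : v*v = b*b-1) by (unfold v; rewrite sqrt_sqrt; try ring; nra).
assert (Hvb : v < b) by nra.
assert (Hv1 : 1 < v) by nra.
assert (Hu3 : u*u < 3) by nra.
assert (Hu2 : u < 2) by nra.
assert (Hw : -v < u - v < v) by nra.
assert (Hw3 : (u-v)^3 + b^3 > 0).
{ assert (b^3 - v^3 = (b-v)*(b^2+b*v+v^2)) by ring.
  assert (0 < (b-v)*(b^2+b*v+v^2)) by (apply Rmult_lt_0_compat; nra).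
  assert ((u-v)^3 + v^3 = u*((u-v)^2 - (u-v)*v + v^2)) by ring.
  assert (0 < u*((u-v)^2 - (u-v)*v + v^2)) by (apply Rmult_lt_0_compat; nra).
  lra. }
repeat split.
- unfold xf. fold u. unfold Rdiv.
  assert (0 < a^6) by (apply pow_lt; lra).
  assert (a^3 < 8).
  { assert (8 - a^3 = (2-a)*(a^2+2*a+4)) by ring.
    assert (0 < (2-a)*(a^2+2*a+4)) by (apply Rmult_lt_0_compat; nra). lra. }
  assert (0 < / a^6) by (apply Rinv_0_lt_compat; lra).
  assert (u * (a^3-8) < 0) by nra. nra.
- unfold y1f. fold u v. exact Hw3.
- eexists. apply d1. lra.
- replace (Derive (fun t => x1f a t) b) with (-3 * (sqrt (a^2-1) - sqrt (b^2-1))^2 * b / sqrt (b^2-1)) by (symmetry; apply is_derive_unique, d1; lra). fold u v.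
  unfold Rdiv. assert (0 < / v) by (apply Rinv_0_lt_compat; lra).
  assert (0 <= (u-v)^2) by (apply pow2_ge_0).
  assert (0 <= 3*(u-v)^2*b*/v). { apply Rmult_le_pos; [|lra]. apply Rmult_le_pos; [|lra]. apply Rmult_le_pos; lra. }
  lra.
- eexists. apply d2. lra.
- replace (Derive (fun t => yf t * y1f a t) b) with (Nf (sqrt (a^2-1)) (sqrt (b^2-1)) b / (sqrt (b^2-1) * b^7)) by (symmetry; apply is_derive_unique, d2; lra). fold u v.
  assert (HN : Nf u v b > 0).
  { unfold Nf.
    replace (b^2*(b^3-8) + 3*v^2*b^3 - 6*v^2*(b^3-8)) with (pz b).
    - apply (key b v (u-v) (pz b)); auto; lra.
    - unfold pz. replace (v^2) with (b*b-1) by (rewrite <- Hvv; ring). ring. }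
  assert (0 < v * b^7) by (apply Rmult_lt_0_compat; [lra|apply pow_lt; lra]).
  unfold Rdiv. apply Rmult_lt_0_compat; [lra|]. apply Rinv_0_lt_compat; lra.
Qed.
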